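(* Let $R$ be a finite commutative local Frobenius ring with residue field $\mathbb{F}_q$ and $|R|=q^\omega$, and let $\ell$ be a nonnegative integer. For $i=1,2$, let $C_i$ be a linear code of length $n$ over $R$ with generator matrix $\mathrm{G}_i$ and parity check matrix $\mathrm{H}_i$, and suppose $C_1+C_2=R^n$. Then $\{C_1,C_2\}$ is an $\ell$-DLIP if and only if $\texttt{Rank}_q(\mathrm{H}_2\mathrm{G}_1^\top)=\texttt{Rank}_q(\mathrm{G}_1)-\ell=n\omega-\texttt{Rank}_q(\mathrm{G}_2)$ or $\texttt{Rank}_q(\mathrm{H}_1\mathrm{G}_2^\top)=\texttt{Rank}_q(\mathrm{G}_2)-\ell=n\omega-\texttt{Rank}_q(\mathrm{G}_1)$.
   Context: A linear code of length $n$ over $R$ is an $R$-submodule of $R^n$; $\dim(C):=\log_q|C|$. A pair $\{C,D\}$ is an $\ell$-DLIP if $\dim(C\cap D)=\ell$. A generator matrix of $C$ is a matrix whose rows generate $C$; a parity check matrix is a generator matrix of $C^\perp$ with respect to the standard inner product $\sum_j u_jc_j$. For a matrix $\mathrm{A}$ over $R$, $\texttt{Rank}_q(\mathrm{A}):=\log_q|M|$ where $M$ is the $R$-submodule spanned by the rows of $\mathrm{A}$. *)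

(* Defs.v *)
From Stdlib Require Import Reals.
From mathcomp Require Import all_boot all_algebra.

Set Implicit Arguments.
Unset Strict Implicit.
Unset Printing Implicit Defensive.

Import GRing.Theory.
Delimit Scope ring_scope with ring.

Section Defs.
Variable Rg : finComNzRingType.

Definition is_ideal (I : {set Rg}) : Prop :=
  [/\ (0%R : Rg) \in I,
      forall x y, x \in I -> y \in I -> (x + y)%R \in I
    & forall r x, x \in I -> (r * x)%R \in I].

Definition maximal_ideal (M : {set Rg}) : Prop :=
  [/\ is_ideal M, (1%R : Rg) \notin M &
      forall J : {set Rg}, is_ideal J -> M \subset J -> J = M \/ J = setT].

Definition local_ring_with (M : {set Rg}) : Prop :=
  maximal_ideal M /\ forall M', maximal_ideal M' -> M' = M.

Definition minimal_ideal (I : {set Rg}) : Prop :=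
  [/\ is_ideal I, I != [set 0%R] &
      forall J : {set Rg}, is_ideal J -> J \subset I -> J = [set 0%R] \/ J = I].

(** A finite commutative LOCAL ring is Frobenius iff its socle
    (sum of minimal ideals) is isomorphic to the residue field R/m, i.e.
    iff it has a unique minimal (nonzero) ideal. *)
Definition local_frobenius : Prop :=
  exists I, minimal_ideal I /\ forall J, minimal_ideal J -> J = I.

(** Cardinality of the residue field R/M (index of the additive subgroup M). *)
Definition residue_card (M : {set Rg}) : nat := #|Rg| %/ #|M|.

Variable n : nat.

Definition linear_code (C : {set 'rV[Rg]_n}) : Prop :=
  [/\ (0%R : 'rV[Rg]_n) \in C,
      forall x y, x \in C -> y \in C -> (x + y)%R \in C
    & forall (r : Rg) x, x \in C -> (r *: x)%R \in C].

Definition inner (u c : 'rV[Rg]_n) : Rg :=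
  (\sum_(j < n) u ord0 j * c ord0 j)%ring.

Definition dual_code (C : {set 'rV[Rg]_n}) : {set 'rV[Rg]_n} :=
  [set u | [forall c in C, inner u c == 0%R]].

Definition rowspan k (A : 'M[Rg]_(k, n)) : {set 'rV[Rg]_n} :=
  [set (u *m A)%R | u : 'rV[Rg]_k].

Definition code_sum (C D : {set 'rV[Rg]_n}) : {set 'rV[Rg]_n} :=
  [set (x + y)%R | x in C, y in D].

Definition is_generator_matrix k (G : 'M[Rg]_(k, n)) (C : {set 'rV[Rg]_n}) :=
  rowspan G = C.

Definition is_parity_check_matrix k (H : 'M[Rg]_(k, n)) (C : {set 'rV[Rg]_n}) :=
  rowspan H = dual_code C.

Definition dimq (q : nat) (M : {set 'rV[Rg]_n}) : R :=
  Rdiv (ln (INR #|M|)) (ln (INR q)).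

End Defs.

Definition Rankq (Rg : finComNzRingType) (q : nat) k m (A : 'M[Rg]_(k, m)) : R :=
  dimq q (rowspan A).

Definition DLIP (Rg : finComNzRingType) (n q l : nat) (C D : {set 'rV[Rg]_n}) : Prop :=
  dimq q (C :&: D) = INR l.

(* Main.v *)
Require Import Defs.
From Stdlib Require Import Reals Classical Lra.
From mathcomp Require Import all_boot all_algebra zify.

Set Implicit Arguments.
Unset Strict Implicit.
Unset Printing Implicit Defensive.
Import GRing.Theory.


Lemma card_fibers (T U : finType) (f : T -> U) (X : {set T}) k :
  (forall x, x \in X -> #|[set y in X | f y == f x]| = k) ->
  #|X| = (#|f @: X| * k)%N.
Proof.
move=> H. rewrite -sum1_card (partition_big_imset f).
rewrite -sum_nat_const. apply: eq_bigr => j /imsetP [x Hx ->].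
rewrite -(H x Hx) -sum1_card. apply: eq_bigl => y. by rewrite inE.
Qed.

Lemma card_ker (T U : finZmodType) (f : T -> U) (X : {set T}) :
  (forall a b, f (a - b)%R = (f a - f b)%R) -> 0%R \in X ->
  (forall a b, a \in X -> b \in X -> (a - b)%R \in X) ->
  #|X| = (#|f @: X| * #|[set x in X | f x == 0%R]|)%N.
Proof.
move=> fB X0 XB.
have f0 : f 0%R = 0%R by rewrite -(subrr 0%R) fB subrr.
have fN : forall z, f (- z)%R = (- f z)%R by move=> z; rewrite -sub0r fB f0 sub0r.
have XN : forall z, z \in X -> (- z)%R \in X by move=> z hz; rewrite -sub0r XB.
apply: card_fibers => x Hx.
have -> : [set y in X | f y == f x] = (fun z => x + z)%R @: [set z in X | f z == 0%R].
  apply/setP => y; apply/idP/imsetP.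
  - rewrite inE => /andP [Hy /eqP Hf]. exists (y - x)%R.
      by rewrite inE XB // fB Hf subrr eqxx.
    by rewrite addrC subrK.
  - case=> z hz ->; move: hz; rewrite !inE => /andP [Hz /eqP Hfz].
    have -> : (x + z = x - (- z))%R by rewrite opprK.
    by rewrite XB ?XN // fB fN Hfz oppr0 subr0 eqxx.
by apply: card_imset; exact: addrI.
Qed.

Section Ring.
Local Open Scope ring_scope.

Lemma ideal_one (Rg : finComNzRingType) (I : {set Rg}) :
  is_ideal I -> 1 \in I -> I = setT.
Proof.
case=> _ _ hm h1; apply/setP => r; rewrite inE -[r]mulr1; exact: hm.
Qed.

Lemma proper_in_M (Rg : finComNzRingType) (M : {set Rg}) :
  local_ring_with M -> forall J, is_ideal J -> 1 \notin J -> J \subset M.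
Proof.
move=> hloc.
suff H : forall k (J : {set Rg}), (#|Rg| - #|J| <= k)%N -> is_ideal J -> 1 \notin J -> J \subset M.
  by move=> J; apply: (H _ J (leqnn _)).
elim=> [|k IH] J hk hJ h1.
  have : J == setT by rewrite eqEcard subsetT cardsT /=; move: hk; rewrite leqn0 subn_eq0.
  by move/eqP => eJ; rewrite eJ inE in h1.
case: (classic (maximal_ideal J)) => [hm | hnm].
  by rewrite (proj2 hloc J hm).
have [K [hK [JK [KJ KT]]]] : exists K, is_ideal K /\ J \subset K /\ K <> J /\ K <> setT.
  apply: NNPP => hne; apply: hnm; split => // K0 hK0 JK0.
  apply: NNPP => hno; apply: hne; exists K0; split; first by [].
  split; first by [].
  by split => ?; apply: hno; [left|right].
have h1K : 1 \notin K by apply/negP => /(ideal_one hK).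
have hp : J \proper K.
  rewrite properEneq JK andbT; apply/negP => /eqP e; by apply: KJ.
have := proper_card hp => hc.
have hKk : (#|Rg| - #|K| <= k)%N.
  have : (#|K| <= #|Rg|)%N by apply: max_card.
  lia.
exact: subset_trans JK (IH K hKk hK h1K).
Qed.

Lemma unit_notM (Rg : finComNzRingType) (M : {set Rg}) :
  local_ring_with M -> forall r, r \notin M -> exists v, v * r = 1.
Proof.
move=> hloc r hr.
pose I := (fun v => v * r) @: [set: Rg].
have hI : is_ideal I.
  split.
  - by apply/imsetP; exists 0; rewrite ?inE // mul0r.
  - move=> x y /imsetP [a _ ->] /imsetP [b _ ->]; apply/imsetP; exists (a + b);
      by rewrite ?inE // mulrDl.
  - move=> s x /imsetP [a _ ->]; apply/imsetP; exists (s * a); by rewrite ?inE // mulrA.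
case: (boolP (1 \in I)) => [/imsetP [v _ hv] | h1]; first by exists v.
have := proper_in_M hloc hI h1 => /subsetP sub.
have : r \in I by apply/imsetP; exists 1; rewrite ?inE // mul1r.
by move/sub; rewrite (negbTE hr).
Qed.

Lemma max_eq (Rg : finComNzRingType) (M : {set Rg}) :
  local_ring_with M -> forall K, is_ideal K -> M \subset K -> 1 \notin K -> K = M.
Proof.
move=> [[_ _ hmax] _] K hK MK h1.
case: (hmax K hK MK) => // eK; by rewrite eK inE in h1.
Qed.

Definition annM (Rg : finComNzRingType) (M : {set Rg}) :=
  [set a : Rg | [forall m in M, m * a == 0]].

Lemma annM_bound (Rg : finComNzRingType) (M : {set Rg}) :
  local_ring_with M -> local_frobenius Rg -> (#|annM M| * #|M| <= #|Rg|)%N.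
Proof.
move=> hloc [S [hS Suniq]].
have hM : is_ideal M by case: hloc => [[]].
pose Ra a := (fun r => r * a) @: [set: Rg].
have annP : forall a m, a \in annM M -> m \in M -> m * a = 0.
  by move=> a m; rewrite inE => /forall_inP H hm; apply/eqP; apply: H.
have RaI : forall a, is_ideal (Ra a).
  move=> a; split.
  - by apply/imsetP; exists 0; rewrite ?inE // mul0r.
  - move=> x y /imsetP [u _ ->] /imsetP [v _ ->]; apply/imsetP; exists (u + v);
      by rewrite ?inE // mulrDl.
  - move=> s x /imsetP [u _ ->]; apply/imsetP; exists (s * u); by rewrite ?inE // mulrA.
have aRa : forall a, a \in Ra a by move=> a; apply/imsetP; exists 1; rewrite ?inE // mul1r.
have minRa : forall a, a \in annM M -> a != 0 -> minimal_ideal (Ra a).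
  move=> a ha a0; split => //.
    apply/negP => /eqP e; move: (aRa a); rewrite e inE; exact/negP.
  move=> J hJ JRa.
  case: (boolP [exists b in J, b != 0]) => [/exists_inP [b hb b0] | hno]; last first.
    left; apply/setP => x; rewrite inE; apply/idP/eqP => [hx | ->]; last by case: hJ.
    apply/eqP; apply: contraNT hno => hx0; apply/exists_inP; by exists x.
  right; apply/eqP; rewrite eqEsubset JRa /=.
  move/subsetP: JRa => /(_ b hb) /imsetP [r _ er].
  have rM : r \notin M.
    by apply/negP => hr; move: b0; rewrite er annP ?eqxx.
  have [v hv] := unit_notM hloc rM.
  apply/subsetP => y /imsetP [u _ ->].
  have -> : u * a = (u * v) * b by rewrite er mulrA -(mulrA u) hv mulr1.
  by case: hJ => _ _; apply.
have cardRa : forall a, a \in annM M -> a != 0 -> (#|Ra a| * #|M| = #|Rg|)%N.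
  move=> a ha a0.
  have hK : [set r | r * a == 0] = M.
    apply: (max_eq hloc).
    - split; first by rewrite inE mul0r.
      + by move=> x y; rewrite !inE mulrDl => /eqP -> /eqP ->; rewrite addr0.
      + by move=> r x; rewrite !inE -mulrA => /eqP ->; rewrite mulr0.
    - by apply/subsetP => m hm; rewrite inE annP.
    - by rewrite inE mul1r.
  have e := @card_ker Rg Rg (fun r => r * a) [set: Rg] (fun x y => mulrBl _ _ _)
    (in_setT _) (fun x y _ _ => in_setT _).
  rewrite cardsT in e; rewrite e.
  congr (_ * _)%N. rewrite -hK; apply: eq_card => x; by rewrite !inE.
case: (boolP [exists a in annM M, a != 0]) => [/exists_inP [a ha a0] | hno].
  rewrite -(cardRa a ha a0) leq_mul2r; apply/orP; right.
  apply: subset_leq_card; apply/subsetP => b hb.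
  case: (eqVneq b 0) => [-> | b0].
    by apply/imsetP; exists 0; rewrite ?inE // mul0r.
  have e1 := Suniq _ (minRa a ha a0).
  have e2 := Suniq _ (minRa b hb b0).
  by rewrite e1 -e2.
have : (#|annM M| <= 1)%N.
  rewrite -(cards1 (0 : Rg)); apply: subset_leq_card; apply/subsetP => b hb.
  rewrite inE; apply: contraNT hno => hb0; apply/exists_inP; by exists b.
have : (#|M| <= #|Rg|)%N by apply: max_card.
nia.
Qed.

End Ring.



Section Codes.
Local Open Scope ring_scope.

Lemma inner_mx (Rg : finComNzRingType) n (u c : 'rV[Rg]_n) :
  inner u c = (u *m c^T) 0 0.
Proof. rewrite /inner mxE; apply: eq_bigr => j _; by rewrite mxE. Qed.

Lemma innerDr (Rg : finComNzRingType) n (u a b : 'rV[Rg]_n) :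
  inner u (a + b) = inner u a + inner u b.
Proof. rewrite /inner -big_split; apply: eq_bigr => j _; by rewrite mxE mulrDr. Qed.

Lemma innerZr (Rg : finComNzRingType) n (u c : 'rV[Rg]_n) r :
  inner u (r *: c) = r * inner u c.
Proof. rewrite /inner mulr_sumr; apply: eq_bigr => j _; by rewrite mxE mulrCA. Qed.

Lemma innerBl (Rg : finComNzRingType) n (u v c : 'rV[Rg]_n) :
  inner (u - v) c = inner u c - inner v c.
Proof. rewrite /inner -sumrB; apply: eq_bigr => j _; by rewrite !mxE mulrBl. Qed.

Lemma inner0l (Rg : finComNzRingType) n (c : 'rV[Rg]_n) : inner 0 c = 0.
Proof. by rewrite -(subrr (0 : 'rV[Rg]_n)) innerBl subrr. Qed.

Lemma inner_delta (Rg : finComNzRingType) n (d : 'rV[Rg]_n) j :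
  inner d (delta_mx 0 j) = d 0 j.
Proof.
rewrite /inner (bigD1 j) //= big1 ?addr0; first by rewrite mxE !eqxx mulr1.
by move=> i /negbTE ne; rewrite mxE eqxx /= ne mulr0.
Qed.

Lemma dual_inP (Rg : finComNzRingType) n (C : {set 'rV[Rg]_n}) d :
  reflect (forall c, c \in C -> inner d c = 0) (d \in dual_code C).
Proof.
rewrite inE; apply: (iffP forall_inP) => H c Hc; apply/eqP; exact: H.
Qed.

Lemma orth_all (Rg : finComNzRingType) n (d : 'rV[Rg]_n) :
  (forall c, inner d c = 0) -> d = 0.
Proof. move=> H; apply/rowP => j; by rewrite mxE -inner_delta H. Qed.

Lemma dual0 (Rg : finComNzRingType) n (C : {set 'rV[Rg]_n}) : 0 \in dual_code C.
Proof. apply/dual_inP => c _; exact: inner0l. Qed.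

Lemma dualB (Rg : finComNzRingType) n (C : {set 'rV[Rg]_n}) a b :
  a \in dual_code C -> b \in dual_code C -> a - b \in dual_code C.
Proof.
move=> /dual_inP ha /dual_inP hb; apply/dual_inP => c hc.
by rewrite innerBl ha // hb // subrr.
Qed.

Definition span (Rg : finComNzRingType) n (C : {set 'rV[Rg]_n}) (x : 'rV[Rg]_n) :=
  (fun p : Rg * 'rV[Rg]_n => p.1 *: x + p.2) @: setX [set: Rg] C.

Lemma spanP (Rg : finComNzRingType) n (C : {set 'rV[Rg]_n}) x y :
  reflect (exists r c, c \in C /\ y = r *: x + c) (y \in span C x).
Proof.
apply: (iffP imsetP).
  by case=> [[r c]]; rewrite in_setX => /andP [_ hc] ->; exists r, c.
by case=> r [c [hc ->]]; exists (r, c); rewrite // in_setX inE.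
Qed.

Lemma lin_opp (Rg : finComNzRingType) n (C : {set 'rV[Rg]_n}) :
  linear_code C -> forall a b, a \in C -> b \in C -> a - b \in C.
Proof.
case=> h0 hD hZ a b ha hb; apply: hD => //.
by rewrite -scaleN1r; apply: hZ.
Qed.

Lemma dual_le (Rg : finComNzRingType) (M : {set Rg}) :
  local_ring_with M -> local_frobenius Rg ->
  forall n (C : {set 'rV[Rg]_n}), linear_code C ->
  (#|C| * #|dual_code C| <= #|Rg| ^ n)%N.
Proof.
move=> hloc hfrob n.
have hM : is_ideal M by case: hloc => [[]].
have cardV : #|[set: 'rV[Rg]_n]| = (#|Rg| ^ n)%N by rewrite cardsT card_mx mul1n.
have Rpos : (0 < #|Rg|)%N by apply/card_gt0P; exists 0.
have full : forall C : {set 'rV[Rg]_n}, C = setT -> (#|C| * #|dual_code C| <= #|Rg| ^ n)%N.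
  move=> C ->; rewrite cardV -{2}(muln1 (_ ^ _)%N) leq_mul2l; apply/orP; right.
  apply: (@leq_trans #|[set (0 : 'rV[Rg]_n)]|); last by rewrite cards1.
  apply: subset_leq_card; apply/subsetP => d hd.
  rewrite inE; apply/eqP; apply: orth_all => c; move/dual_inP: hd; apply; by rewrite inE.
suff H : forall k (C : {set 'rV[Rg]_n}), (#|[set: 'rV[Rg]_n]| - #|C| <= k)%N ->
    linear_code C -> (#|C| * #|dual_code C| <= #|Rg| ^ n)%N.
  by move=> C; apply: (H _ C (leqnn _)).
elim=> [|k IH] C hk hC.
  apply: full; apply/eqP; rewrite eqEcard subsetT /=; move: hk; by rewrite leqn0 subn_eq0.
case: (boolP [exists x, x \notin C]) => [/existsP [x hx] | hno]; last first.
  apply: full; apply/setP => y; rewrite inE; apply: contraNT hno => hy.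
  by apply/existsP; exists y.
have [h0 hDC hZC] := hC.
have hBC := lin_opp hC.
pose P := fun m => [exists y, (y \notin C) && (#|span C y| == m)].
have exP : exists m, P m by exists #|span C x|; apply/existsP; exists x; rewrite hx eqxx.
case: (ex_minnP exP) => m /existsP [x0 /andP [hx0 /eqP hm]] hmin.
have minx : forall y, y \notin C -> (#|span C x0| <= #|span C y|)%N.
  by move=> y hy; rewrite hm; apply: hmin; apply/existsP; exists y; rewrite hy eqxx.
set D := span C x0.
have hD : linear_code D.
  split.
  - by apply/spanP; exists 0, 0; rewrite h0 scale0r addr0.
  - move=> a b /spanP [r [c [hc ->]]] /spanP [r' [c' [hc' ->]]].
    apply/spanP; exists (r + r'), (c + c'); split; first by apply: hDC.
    by rewrite scalerDl addrACA.
  - move=> s a /spanP [r [c [hc ->]]]; apply/spanP; exists (s * r), (s *: c).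
    by split; [apply: hZC | rewrite scalerDr scalerA].
have CD : C \subset D.
  by apply/subsetP => c hc; apply/spanP; exists 0, c; rewrite scale0r add0r.
have x0D : x0 \in D by apply/spanP; exists 1, 0; rewrite h0 scale1r addr0.
have MC : forall mm, mm \in M -> mm *: x0 \in C.
  move=> mm hmm; apply/negPn/negP => hy.
  have sub : span C (mm *: x0) \subset D.
    apply/subsetP => y /spanP [r [c [hc ->]]]; apply/spanP; exists (r * mm), c.
    by rewrite scalerA.
  have eqS : span C (mm *: x0) = D by apply/eqP; rewrite eqEcard sub /=; apply: minx.
  move: x0D; rewrite -eqS => /spanP [r [c [hc ex]]].
  have hc' : (1 - r * mm) *: x0 = c.
    rewrite scalerBl scale1r -scalerA {1}ex; by rewrite addrAC subrr add0r.
  have nM : 1 - r * mm \notin M.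
    apply/negP => h1; case: hloc => [[_ h1M _] _]; move/negP: h1M; apply.
    have -> : (1 : Rg) = (1 - r * mm) + r * mm by rewrite subrK.
    case: hM => _ hMD hMZ; apply: hMD => //; exact: hMZ.
  have [v hv] := unit_notM hloc nM.
  move/negP: hx0; apply.
  by rewrite -[x0]scale1r -hv -scalerA hc'; apply: hZC.
have colon : [set r | r *: x0 \in C] = M.
  apply: (max_eq hloc).
  - split; first by rewrite inE scale0r.
    + by move=> a b; rewrite !inE scalerDl; apply: hDC.
    + by move=> s a; rewrite !inE -scalerA; apply: hZC.
  - by apply/subsetP => mm hmm; rewrite inE MC.
  - by rewrite inE scale1r.
have cardD : (#|D| * #|M| = #|Rg| * #|C|)%N.
  suff e : #|setX [set: Rg] C| = (#|D| * #|M|)%N by rewrite -e cardsX cardsT.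
  apply: card_fibers.
  move=> [a c]; rewrite in_setX => /andP [_ hc] /=.
  have -> : [set y in setX [set: Rg] C | y.1 *: x0 + y.2 == a *: x0 + c] =
     (fun mm => (a + mm, c - mm *: x0)) @: M.
    apply/setP => [[r c']]; rewrite inE in_setX inE /=; apply/idP/imsetP.
    - move=> /andP [hc' /eqP hf].
      have E' : r *: x0 = a *: x0 + (c - c') by rewrite addrA -hf addrK.
      have E2 : r *: x0 - a *: x0 = c - c' by rewrite E' addrC addKr.
      exists (r - a).
        by rewrite -colon inE scalerBl E2; apply: hBC.
      congr (_, _); first by rewrite addrC subrK.
      by rewrite scalerBl E2 opprB addrC subrK.
    - case=> mm hmm [-> ->]; rewrite hBC ?MC //=.
      by rewrite scalerDl addrACA subrr addr0.
  apply: card_imset => mm1 mm2 /(congr1 fst) /=; exact: addrI.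
have dualD : (#|dual_code C| <= #|dual_code D| * #|annM M|)%N.
  rewrite (@card_ker _ _ (fun d => inner d x0) (dual_code C)); last 3 first.
  - by move=> a b; rewrite innerBl.
  - exact: dual0.
  - by move=> a b; apply: dualB.
  rewrite mulnC leq_mul //.
    apply: subset_leq_card; apply/subsetP => d; rewrite inE => /andP [hd /eqP h0'].
    apply/dual_inP => y /spanP [r [c [hc ->]]].
    by move/dual_inP: hd => hd; rewrite innerDr innerZr h0' mulr0 add0r hd.
  apply: subset_leq_card; apply/subsetP => _ /imsetP [d hd ->].
  rewrite inE; apply/forall_inP => mm hmm; rewrite -innerZr; apply/eqP.
  move/dual_inP: hd; apply; exact: MC.
have hA := annM_bound hloc hfrob.
have hpc : C \proper D.
  rewrite properE CD /=; apply/negP => /subsetP /(_ x0 x0D); exact/negP.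
have ltCD := proper_card hpc.
have leDV : (#|D| <= #|[set: 'rV[Rg]_n]|)%N by apply: subset_leq_card; apply: subsetT.
have hkD : (#|[set: 'rV[Rg]_n]| - #|D| <= k)%N.
  rewrite -ltnS; exact: leq_trans (ltn_sub2l (leq_trans ltCD leDV) ltCD) hk.
have IHD := IH D hkD hD.
rewrite -(leq_pmul2l Rpos) mulnA -cardD.
apply: (@leq_trans (#|D| * #|M| * (#|dual_code D| * #|annM M|))).
  by rewrite leq_mul2l dualD orbT.
rewrite mulnACA (mulnC #|M|) [X in (_ <= X)%N]mulnC; exact: leq_mul IHD hA.
Qed.

End Codes.



Section Mx.
Local Open Scope ring_scope.

Lemma rowspanE (Rg : finComNzRingType) n k (A : 'M[Rg]_(k, n)) :
  rowspan A = (fun u => u *m A) @: [set: 'rV[Rg]_k].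
Proof.
apply/setP => y; apply/imsetP/imsetP => [[u _ ->]|[u _ ->]]; by exists u.
Qed.

Lemma rowspan_lin (Rg : finComNzRingType) n k (A : 'M[Rg]_(k, n)) :
  linear_code (rowspan A).
Proof.
rewrite rowspanE; split.
- by apply/imsetP; exists 0; rewrite ?inE // mul0mx.
- move=> x y /imsetP [u _ ->] /imsetP [v _ ->]; apply/imsetP; exists (u + v);
    by rewrite ?inE // mulmxDl.
- move=> r x /imsetP [u _ ->]; apply/imsetP; exists (r *: u); by rewrite ?inE // scalemxAl.
Qed.

Lemma dual_rowspan (Rg : finComNzRingType) n k (G : 'M[Rg]_(k, n)) :
  dual_code (rowspan G) = [set d | d *m G^T == 0].
Proof.
apply/setP => d; rewrite [in RHS]inE; apply/dual_inP/eqP.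
  move=> H; apply/rowP => i.
  have e : (d *m G^T) 0 i = inner d (delta_mx 0 i *m G).
    by rewrite inner_mx trmx_mul trmx_delta mulmxA -colE [RHS]mxE.
  rewrite e H ?mxE //.
  by rewrite rowspanE; apply/imsetP; exists (delta_mx 0 i).
move=> H c; rewrite rowspanE => /imsetP [u _ ->].
by rewrite inner_mx trmx_mul mulmxA H mul0mx mxE.
Qed.

Lemma card_rowspan_T (Rg : finComNzRingType) n k (G : 'M[Rg]_(k, n)) :
  (#|Rg| ^ n)%N = (#|rowspan G^T| * #|dual_code (rowspan G)|)%N.
Proof.
have e := @card_ker _ _ (fun d : 'rV[Rg]_n => d *m G^T) [set: 'rV[Rg]_n]
   (fun a b => mulmxBl _ _ _) (in_setT _) (fun a b _ _ => in_setT _).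
rewrite cardsT card_mx mul1n in e; rewrite e rowspanE dual_rowspan.
congr (_ * _)%N; apply: eq_card => d; by rewrite !inE.
Qed.

Lemma dual_eq (Rg : finComNzRingType) (M : {set Rg}) :
  local_ring_with M -> local_frobenius Rg ->
  forall n k (G : 'M[Rg]_(k, n)),
  (#|rowspan G| * #|dual_code (rowspan G)| = #|Rg| ^ n)%N.
Proof.
move=> hloc hfrob n k G.
have h1 := card_rowspan_T G.
have h2 := card_rowspan_T G^T; rewrite trmxK in h2.
have le1 := dual_le hloc hfrob (rowspan_lin G).
have le2 := dual_le hloc hfrob (rowspan_lin G^T).
have p1 : (0 < #|dual_code (rowspan G)|)%N by apply/card_gt0P; exists 0; apply: dual0.
have p2 : (0 < #|dual_code (rowspan G^T)|)%N by apply/card_gt0P; exists 0; apply: dual0.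
have a1 : (#|rowspan G| <= #|rowspan G^T|)%N by rewrite -(leq_pmul2r p1) -h1.
have a2 : (#|rowspan G^T| <= #|rowspan G|)%N by rewrite -(leq_pmul2r p2) -h2.
have e : #|rowspan G| = #|rowspan G^T| by apply/eqP; rewrite eqn_leq a1 a2.
by rewrite e h1.
Qed.

Lemma rank_eq (Rg : finComNzRingType) n k r (G : 'M[Rg]_(k, n)) (H : 'M[Rg]_(r, n))
  (D : {set 'rV[Rg]_n}) :
  rowspan H = dual_code D ->
  (forall d, d \in dual_code (rowspan G) -> d \in dual_code D -> d = 0) ->
  #|rowspan (H *m G^T)| = #|dual_code D|.
Proof.
move=> hH hz.
have -> : rowspan (H *m G^T) = (fun d => d *m G^T) @: dual_code D.
  rewrite -hH !rowspanE -imset_comp; apply: eq_imset => u /=; by rewrite mulmxA.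
apply: card_in_imset => a b ha hb /= e.
apply/eqP; rewrite -subr_eq0; apply/eqP; apply: hz; last exact: dualB.
by rewrite dual_rowspan inE mulmxBl e subrr.
Qed.

End Mx.

Section Real.
Local Open Scope R_scope.
Lemma INR_expn (a k : nat) : INR (a ^ k)%N = INR a ^ k.
Proof.
elim: k => [|k IH]; first by rewrite expn0.
by rewrite expnS mult_INR IH /=.
Qed.

Lemma ln_INR_mul (a b : nat) : (0 < a)%N -> (0 < b)%N ->
  ln (INR (a * b)%N) = ln (INR a) + ln (INR b).
Proof.
move=> /ltP ha /ltP hb; rewrite mult_INR ln_mult //; exact: lt_0_INR.
Qed.

Lemma lnN_lem (q k : nat) : (2 <= q)%N -> ln (INR (q ^ k)%N) = INR k * ln (INR q).
Proof.
move=> q2; rewrite INR_expn ln_pow //; apply: lt_0_INR; apply/ltP; exact: leq_trans q2.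
Qed.

Lemma L0_lem (q : nat) : (2 <= q)%N -> 0 < ln (INR q).
Proof.
move=> q2; rewrite -ln_1; apply: ln_increasing; first lra.
have : 2 <= INR q by apply: (le_INR 2); apply/leP.
lra.
Qed.

Lemma real_final (L a1 a2 b d1 d2 N l : R) : 0 < L ->
  a1 + a2 = N * L + b -> a1 + d1 = N * L -> a2 + d2 = N * L ->
  (b / L = l <-> ((d2 / L = a1 / L - l /\ a1 / L - l = N - a2 / L) \/
                  (d1 / L = a2 / L - l /\ a2 / L - l = N - a1 / L))).
Proof.
move=> L0 E12 E1 E2.
have Eb : b / L = a1 / L + a2 / L - N.
  have -> : b = a1 + a2 - N * L by lra.
  field; lra.
have Ed1 : d1 / L = N - a1 / L.
  have -> : d1 = N * L - a1 by lra.
  field; lra.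
have Ed2 : d2 / L = N - a2 / L.
  have -> : d2 = N * L - a2 by lra.
  field; lra.
rewrite Eb Ed1 Ed2.
split => [H | [[H H'] | [H H']]]; [left; split; lra | lra | lra].
Qed.
End Real.

Unset Implicit Arguments.

Theorem corollary3p12
  (Rg : finComNzRingType) (M : {set Rg}) (q omega l n : nat)
  (hloc : local_ring_with M) (hfrob : local_frobenius Rg)
  (hq : residue_card M = q) (hcard : #|Rg| = q ^ omega)
  (C1 C2 : {set 'rV[Rg]_n}) (hC1 : linear_code C1) (hC2 : linear_code C2)
  (k1 k2 r1 r2 : nat)
  (G1 : 'M[Rg]_(k1, n)) (G2 : 'M[Rg]_(k2, n))
  (H1 : 'M[Rg]_(r1, n)) (H2 : 'M[Rg]_(r2, n))
  (hG1 : is_generator_matrix G1 C1) (hG2 : is_generator_matrix G2 C2)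
  (hH1 : is_parity_check_matrix H1 C1) (hH2 : is_parity_check_matrix H2 C2)
  (hsum : code_sum C1 C2 = setT) :
  DLIP q l C1 C2 <->
  ((Rankq q (H2 *m G1^T)%R = Rminus (Rankq q G1) (INR l) /\
    Rminus (Rankq q G1) (INR l) = Rminus (INR (n * omega)) (Rankq q G2)) \/
   (Rankq q (H1 *m G2^T)%R = Rminus (Rankq q G2) (INR l) /\
    Rminus (Rankq q G2) (INR l) = Rminus (INR (n * omega)) (Rankq q G1))).
Proof.
have R2 : (2 <= #|Rg|)%N.
  have := cards2 (0%R : Rg) 1%R; rewrite eq_sym GRing.oner_neq0 => <-.
  exact: max_card.
have q2 : (2 <= q)%N.
  move: R2; rewrite hcard; clear.
  case: q => [|[|q']] //; case: omega => // o; by rewrite ?exp1n ?exp0n.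
have N_eq : (#|Rg| ^ n)%N = (q ^ (n * omega))%N by rewrite hcard -expnM mulnC.
have pos : forall X : {set 'rV[Rg]_n}, (0%R \in X) -> (0 < #|X|)%N.
  by move=> X hX; apply/card_gt0P; exists 0%R.
have [h01 _ _] := hC1.
have [h02 _ _] := hC2.
have e12 : (#|C1| * #|C2| = #|Rg| ^ n * #|C1 :&: C2|)%N.
  rewrite -cardsX.
  have -> : (#|Rg| ^ n)%N = #|(fun p : 'rV[Rg]_n * 'rV[Rg]_n => p.1 + p.2)%R @: setX C1 C2|.
    have -> : (fun p : 'rV[Rg]_n * 'rV[Rg]_n => p.1 + p.2)%R @: setX C1 C2 = setT.
      rewrite -hsum; apply/setP => v; apply/imsetP/imset2P.
        by case=> -[x y]; rewrite in_setX => /andP [hx hy] ->; exists x y.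
      by case=> x y hx hy ->; exists (x, y); rewrite ?in_setX ?hx ?hy.
    by rewrite cardsT card_mx mul1n.
  apply: card_fibers => -[a b]; rewrite in_setX => /andP [ha hb] /=.
  have -> : [set y in setX C1 C2 | (y.1 + y.2 == a + b)%R] =
      (fun z => (a + z, b - z)%R) @: (C1 :&: C2).
    apply/setP => -[x y]; rewrite inE in_setX /=; apply/idP/imsetP.
    - move=> /andP [/andP [hx hy] /eqP hf]; exists (x - a)%R.
        rewrite inE; apply/andP; split; first exact: (lin_opp hC1).
        have -> : (x - a = b - y)%R.
          have E : x = (a + (b - y))%R by rewrite GRing.addrA -hf GRing.addrK.
          by rewrite E GRing.addrC GRing.addKr.
        exact: (lin_opp hC2).
      congr (_, _); first by rewrite GRing.addrC GRing.subrK.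
      have -> : (x - a = b - y)%R.
        have E : x = (a + (b - y))%R by rewrite GRing.addrA -hf GRing.addrK.
        by rewrite E GRing.addrC GRing.addKr.
      by rewrite GRing.opprB GRing.addrC GRing.subrK.
    - case=> z; rewrite inE => /andP [hz1 hz2] [-> ->].
      rewrite (lin_opp hC2) // andbT.
      have [_ hD _] := hC1.
      rewrite hD //=.
      by rewrite GRing.addrACA GRing.subrr GRing.addr0.
  apply: card_imset => z1 z2 /(congr1 fst) /=; exact: GRing.addrI.
have e2 : (#|C2| * #|dual_code C2| = #|Rg| ^ n)%N.
  by rewrite -hG2; apply: (dual_eq hloc hfrob).
have e1 : (#|C1| * #|dual_code C1| = #|Rg| ^ n)%N.
  by rewrite -hG1; apply: (dual_eq hloc hfrob).
have z12 : forall d, d \in dual_code C1 -> d \in dual_code C2 -> d = 0%R.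
  move=> d /dual_inP d1 /dual_inP d2; apply: orth_all => c.
  have : c \in code_sum C1 C2 by rewrite hsum inE.
  case/imset2P => x y hx hy ->; by rewrite innerDr d1 // d2 // GRing.addr0.
have rk1 : #|rowspan (H2 *m G1^T)%R| = #|dual_code C2|.
  apply: rank_eq => //; rewrite hG1 => d ha hb; exact: z12.
have rk2 : #|rowspan (H1 *m G2^T)%R| = #|dual_code C1|.
  apply: rank_eq => //; rewrite hG2 => d ha hb; exact: z12.
rewrite /DLIP /Rankq /dimq rk1 rk2 hG1 hG2.
have pI : (0 < #|C1 :&: C2|)%N by apply: pos; rewrite inE h01 h02.
have p1 := pos _ h01. have p2 := pos _ h02.
have pd1 : (0 < #|dual_code C1|)%N by apply: pos; apply: dual0.
have pd2 : (0 < #|dual_code C2|)%N by apply: pos; apply: dual0.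
have lnN : ln (INR (#|Rg| ^ n)) = Rmult (INR (n * omega)) (ln (INR q)).
  by rewrite N_eq lnN_lem.
have E12 := congr1 (fun x => ln (INR x)) e12.
have E1 := congr1 (fun x => ln (INR x)) e1.
have E2 := congr1 (fun x => ln (INR x)) e2.
have RnP : (0 < #|Rg| ^ n)%N by rewrite expn_gt0 (leq_trans _ R2).
rewrite /= !ln_INR_mul // lnN in E12 E1 E2.
exact: real_final (@L0_lem q q2) E12 E1 E2.
Qed.
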